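(* For all fixed $\alpha,\delta\in(0,1)$ there is a constant $C>0$ such that for every sufficiently large $n$ there is a Boolean function $f:\{0,1\}^n\to\{0,1\}$ with $\mu(f)=\lceil \alpha 2^n\rceil 2^{-n}$ (so $\mu(f)=\alpha$ up to the unavoidable rounding to a multiple of $2^{-n}$) such that $$J^+_S(f)<1-n^{-C}\quad\text{for every } S\subseteq[n] \text{ with } |S|=\lfloor(1/2-\delta)n\rfloor .$$
   Context: $[n]=\{1,\dots,n\}$. For a finite set $T$, $\Omega(T)=\{0,1\}^T$ and $\mu_T$ is the uniform probability measure on $\Omega(T)$; $\mu=\mu_{[n]}$, and for Boolean $f$, $\mu(f)=\mu(\{x:f(x)=1\})$. Points of $\Omega([n])$ are written $(u,v)$ with $u\in\Omega([n]\setminus S)$, $v\in\Omega(S)$. For $S\subseteq[n]$, $J^+_S(f)=\mu_{[n]\setminus S}(\{u\in\Omega([n]\setminus S):\exists v\in\Omega(S),\ f(u,v)=1\})$, i.e. the probability that a uniformly random setting of the variables outside $S$ does not force $f=0$. (The influence of $S$ toward one is $I^+_S(f)=J^+_S(f)-\mu(f)$.) *)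

(* Defs.v *)
From mathcomp Require Import all_boot.
From Stdlib Require Import Reals.
Set Implicit Arguments. Unset Strict Implicit. Unset Printing Implicit Defensive.

(* [n] is 'I_n (indices 0..n-1); Omega(T) for T : {set 'I_n}. *)
Definition Omega n (T : {set 'I_n}) := {ffun {i : 'I_n | i \in T} -> bool}.

Definition cube n := {ffun 'I_n -> bool}.

(* the point (u,v) of Omega([n]) with u in Omega([n]\S), v in Omega(S) *)
Definition glue n (S : {set 'I_n}) (u : Omega (~: S)) (v : Omega S) : cube n :=
  [ffun i => match @insub _ (fun j => j \in S) _ i with
             | Some j => v j
             | None => match @insub _ (fun j => j \in ~: S) _ i with
                       | Some j => u j
                       | None => false
                       end
             end].

Local Open Scope R_scope.

Definition mu n (f : cube n -> bool) : R :=
  INR #|[set x : cube n | f x]| / INR #|{: cube n}|.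

Definition Jplus n (S : {set 'I_n}) (f : cube n -> bool) : R :=
  INR #|[set u : Omega (~: S) | [exists v : Omega S, f (glue u v)]]|
  / INR #|{: Omega (~: S)}|.

Definition is_ceil (x : R) (k : nat) : Prop := INR k - 1 < x <= INR k.
Definition is_floor (x : R) (k : nat) : Prop := INR k <= x < INR k + 1.

(* Main.v *)
Require Import Defs.
From mathcomp Require Import all_boot zify.
Set Implicit Arguments. Unset Strict Implicit. Unset Printing Implicit Defensive.

Lemma sum_prod_ffun (I : finType) (F : I -> bool -> nat) :
  \sum_(x : {ffun I -> bool}) \prod_i F i (x i) = \prod_i (F i true + F i false).
Proof.
have := (@bigA_distr_bigA nat 0 1 muln addn I bool F).
move=> <-. apply: eq_bigr => i _. by rewrite big_bool.
Qed.

Lemma subset_card (T : finType) (A : {set T}) k : k <= #|A| ->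
  exists B : {set T}, B \subset A /\ #|B| = k.
Proof.
move/card_geqP=> [s [us ss sA]].
exists [set x in s]; split.
  by apply/subsetP=> x; rewrite inE => /sA.
rewrite cardsE -ss; exact/card_uniqP.
Qed.

Lemma prod_block (I : finType) (B : {set I}) (x : {ffun I -> bool}) r :
  \prod_i (if i \in B then (if x i then r else r.+1) else 1)
  = r.+1 ^ #|[set i in B | ~~ x i]| * r ^ (#|B| - #|[set i in B | ~~ x i]|).
Proof.
rewrite -big_mkcond /= (bigID (fun i => ~~ x i)) /=.
have -> : \prod_(i in B | ~~ x i) (if x i then r else r.+1) = \prod_(i in B | ~~ x i) r.+1.
  by apply: eq_bigr => i /andP[_ /negbTE ->].
have -> : \prod_(i in B | ~~ ~~ x i) (if x i then r else r.+1) = \prod_(i in B | ~~ ~~ x i) r.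
  by apply: eq_bigr => i /andP[_]; rewrite negbK => ->.
rewrite !prod_nat_const.
congr (_ * _).
  by congr (_ ^ _); apply: eq_card => i; rewrite !inE.
congr (_ ^ _).
rewrite -(cardsID [set i | ~~ x i] B).
have -> : B :&: [set i | ~~ x i] = [set i in B | ~~ x i] by apply/setP=> i; rewrite !inE.
rewrite addKn. apply: eq_card => i; rewrite !inE negbK.
by rewrite unfold_in /= negbK andbC.
Qed.

Lemma pow_mono_thr r z th b : 0 < r -> th <= z -> z <= b ->
  r.+1 ^ th * r ^ (b - th) <= r.+1 ^ z * r ^ (b - z).
Proof.
move=> r0 tz zb.
have -> : b - th = (z - th) + (b - z) by lia.
rewrite (_ : r.+1 ^ z = r.+1 ^ th * r.+1 ^ (z - th)); last by rewrite -expnD; congr (_ ^ _); lia.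
rewrite expnD -!mulnA leq_mul2l; apply/orP; right.
rewrite leq_mul2r; apply/orP; right.
elim: (z - th) => // e IH; rewrite !expnS leq_mul // .
Qed.

Lemma bad_bound (I : finType) (B : {set I}) r th : 0 < r -> th <= #|B| ->
  #|[set x : {ffun I -> bool} | th <= #|[set i in B | ~~ x i]|]|
    * (r.+1 ^ th * r ^ (#|B| - th)) * 2 ^ #|B|
  <= (r.+1 + r) ^ #|B| * 2 ^ #|I|.
Proof.
move=> r0 thB.
set F := fun i (j : bool) => if i \in B then (if j then r else r.+1) else 1.
have HS := sum_prod_ffun F.
have HR : \prod_i (F i true + F i false) = (r.+1 + r) ^ #|B| * 2 ^ #|~: B|.
  rewrite /F (bigID (fun i => i \in B)) /=.
  rewrite (eq_bigr (fun=> r.+1 + r)); last by move=> i ->; rewrite addnC.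
  rewrite [X in _ * X](eq_bigr (fun=> 2)); last by move=> i /negbTE ->.
  rewrite prod_nat_const (prod_nat_const (fun i => i \notin B)); congr (_ * _ ^ _).
  by apply: eq_card=> i; rewrite !inE.
have -> : 2 ^ #|I| = 2 ^ #|~: B| * 2 ^ #|B| by rewrite -expnD addnC cardsC.
rewrite [X in _ <= X]mulnA leq_mul2r; apply/orP; right.
rewrite -HR -HS.
rewrite -sum1_card big_distrl /=.
apply: (@leq_trans (\sum_(x in [set x : {ffun I -> bool} | th <= #|[set i in B | ~~ x i]|]) \prod_i F i (x i))).
  apply: leq_sum => x; rewrite inE => Hx; rewrite mul1n /F prod_block.
  apply: pow_mono_thr => //.
  by apply: subset_leq_card; apply/subsetP => i; rewrite inE => /andP[].
rewrite big_mkcond /=; apply: leq_sum => x _; by case: ifP.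
Qed.

Lemma card_ord_pred n (P : pred nat) :
  #|[set i : 'I_n | P i]| = \sum_(0 <= i < n) P i.
Proof.
rewrite -sum1_card big_mkcond /= big_mkord.
by apply: eq_bigr => i _; rewrite inE; case: (P i).
Qed.

Lemma card_blk n b j : 0 < b -> j.+1 * b <= n ->
  #|[set i : 'I_n | i %/ b == j]| = b.
Proof.
move=> b0 hn; rewrite (card_ord_pred n (fun i => i %/ b == j)).
rewrite (big_cat_nat (n := j * b)) //=; last by lia.
rewrite (big_cat_nat (m := j * b) (n := j * b + b)) //=; try lia.
rewrite big_nat_cond big1; last by move=> i /andP[/andP[H1 H2] _]; case: eqP => //= ?; lia.
rewrite [X in _ + (_ + X)]big_nat_cond [X in _ + (_ + X)]big1; last by move=> i /andP[/andP[H1 H2] _]; case: eqP => //= ?; lia.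
rewrite big_nat_cond (eq_bigr (fun _ => 1)); last first.
  move=> i /andP[/andP[H1 H2] _].
  have -> : i = j * b + (i - j * b) by lia.
  by rewrite divnMDl // divn_small ?addn0 ?eqxx //; lia.
by rewrite -big_nat_cond sum_nat_const_nat; lia.
Qed.

Lemma card_tail n c : #|[set i : 'I_n | c <= i]| = n - c.
Proof.
rewrite (card_ord_pred n (fun i => c <= i)).
case: (leqP c n) => hc.
  rewrite (big_cat_nat (n := c)) //=.
  rewrite big_nat_cond big1; last by move=> i /andP[/andP[H1 H2] _]; case: leqP => //= ?; lia.
  rewrite big_nat_cond (eq_bigr (fun _ => 1)); last by move=> i /andP[/andP[H1 H2] _]; case: leqP => //= ?; lia.
  by rewrite -big_nat_cond sum_nat_const_nat; lia.
rewrite big_nat_cond big1; last by move=> i /andP[/andP[H1 H2] _]; case: leqP => //= ?; lia.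
lia.
Qed.

Lemma glueT n (S : {set 'I_n}) (u : Omega (~: S)) (v : Omega S) (k : {i : 'I_n | i \in ~: S}) :
  glue u v (val k) = u k.
Proof.
rewrite /glue ffunE.
have kS : val k \notin S by have := valP k; rewrite inE.
rewrite insubN //.
by rewrite valK.
Qed.

Lemma zero_count (I : finType) (A : {set I}) :
  #|[set u : {ffun I -> bool} | [forall k in A, u k == false]]| * 2 ^ #|A| = 2 ^ #|I|.
Proof.
set F := fun k (j : bool) => if k \in A then nat_of_bool (j == false) else 1.
have HS := sum_prod_ffun F.
have H1 : \sum_(x : {ffun I -> bool}) \prod_i F i (x i) =
   #|[set u : {ffun I -> bool} | [forall k in A, u k == false]]|.
  rewrite -sum1_card [RHS]big_mkcond /=; apply: eq_bigr => x _.
  rewrite inE; case: forallP => H.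
    rewrite big1 // => i _; rewrite /F; case: ifP => // iA.
    by have := H i; rewrite iA /= => /eqP ->.
  have [i Hi] : exists i, ~~ ((i \in A) ==> (x i == false)).
    by apply/existsP; rewrite -negb_forall; apply/forallP.
  rewrite (bigD1 i) //= /F; move: Hi; case: (i \in A) => //=; case: (x i) => //.
have H2 : \prod_i (F i true + F i false) = 2 ^ #|~: A|.
  rewrite (bigID (fun i => i \in A)) /= /F.
  rewrite big1; last by move=> i ->.
  rewrite (eq_bigr (fun=> 2)); last by move=> i /negbTE ->.
  by rewrite mul1n prod_nat_const; congr (_ ^ _); apply: eq_card => i; rewrite !inE.
by rewrite -H1 HS H2 -expnD addnC cardsC.
Qed.

Lemma kill_bound (I : finType) (U : {set {ffun I -> bool}}) (A : {set I}) :
  (forall u : {ffun I -> bool}, (forall k, k \in A -> u k = false) -> u \notin U) ->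
  #|U| * 2 ^ #|A| + 2 ^ #|I| <= 2 ^ #|I| * 2 ^ #|A|.
Proof.
move=> HU.
set Z := [set u : {ffun I -> bool} | [forall k in A, u k == false]].
have sub : U \subset ~: Z.
  apply/subsetP => u uU; rewrite inE; apply/negP; rewrite inE => /forallP H.
  move: uU; apply/negP; apply: HU => k kA.
  by have := H k; rewrite kA /= => /eqP.
have HUZ := subset_leq_card sub.
have HZc : #|Z| + #|~: Z| = 2 ^ #|I| by rewrite cardsC card_ffun card_bool.
have Hz0 := zero_count A; rewrite -/Z in Hz0.
have HUZ' : #|U| <= #|~: Z| by [].
move: HUZ' HZc Hz0; generalize #|U| #|Z| #|~: Z| (2 ^ #|A|) (2 ^ #|I|) => x z w P Q.
move=> h1 h2 h3; nia.
Qed.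

Lemma bern_nat P D t : P < D -> P ^ t * (P + t) <= P * D ^ t.
Proof.
move=> PD; elim: t => [|t IH]; first by rewrite !expn0; lia.
have h1 : P ^ t <= D ^ t by elim: (t) => // k IHk; rewrite !expnS leq_mul // ltnW.
rewrite !expnS.
have : P * D ^ t * D >= P * D ^ t * P.+1 by rewrite leq_mul2l PD orbT.
move: IH h1; generalize (P ^ t) (D ^ t) => a c; nia.
Qed.

Lemma twice P D : 0 < P -> P < D -> 2 * P ^ P <= D ^ P.
Proof.
move=> P0 PD; have := bern_nat P PD.
rewrite -(leq_pmul2l P0); generalize (P ^ P) (D ^ P) => a c; nia.
Qed.

Lemma bern2 X k : k <= X -> (X + 1) ^ k * (X - k) <= X ^ k.+1.
Proof.
elim: k => [|k IH] h; first by rewrite expn0 mul1n subn0 expn1.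
have := IH (ltnW h).
rewrite !expnS.
have : (X + 1) * (X - k.+1) <= X * (X - k) by nia.
generalize ((X+1)^k) (X ^ k) (X - k.+1) (X - k) => a c e f; nia.
Qed.

Lemma X_ineq r : 0 < r -> r * (4 * r * r.+1 + 1) ^ r < r.+1 * (4 * r * r.+1) ^ r.
Proof.
move=> r0; set X := 4 * r * r.+1.
have hk : r <= X by rewrite /X; nia.
have hb := bern2 hk.
have hpos : 0 < X - r by rewrite /X; nia.
have h2 : r * X < r.+1 * (X - r) by rewrite /X; nia.
rewrite -(ltn_pmul2r hpos).
rewrite expnS in hb.
have hc : 0 < X ^ r by rewrite expn_gt0 /X; nia.
move: hb h2 hc hpos; generalize ((X+1)^r) (X^r) (X - r) => a c e.
move=> h1 h2 h3 h4.
have h5 : r * (a * e) <= r * (X * c) by rewrite leq_mul2l h1 orbT.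
have h6 : r * X * c < r.+1 * e * c by rewrite ltn_pmul2r.
nia.
Qed.

Definition Pn r := (r.+1 + r) ^ (2 * r).
Definition Dn r := r.+1 ^ r.+1 * r ^ r.-1 * 2 ^ (2 * r).

Lemma PD r : 0 < r -> Pn r < Dn r.
Proof.
move=> r0; have := X_ineq r0.
have e1 : (4 * r * r.+1 + 1) ^ r = Pn r.
  by rewrite /Pn mulnC expnM; congr (_ ^ _); rewrite -mulnn; nia.
have e2 : r * Dn r = r.+1 * (4 * r * r.+1) ^ r.
  rewrite /Dn expnM !expnMn.
  case: r r0 {e1} => // s _ /=.
  rewrite (expnS s.+2) (expnS s.+1 s).
  generalize (s.+2 ^ s.+1) (s.+1 ^ s) (2 ^ s.+1) => a c e; nia.
rewrite e1 -e2 ltn_pmul2l //.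
Qed.

Lemma PL r L : (r.+1 + r) ^ (2 * r * L) = Pn r ^ L.
Proof. by rewrite /Pn expnM. Qed.

Lemma DL r L : 0 < r ->
  r.+1 ^ (r.+1 * L) * r ^ (2 * r * L - r.+1 * L) * 2 ^ (2 * r * L) = Dn r ^ L.
Proof.
move=> r0; rewrite (_ : 2 * r * L - r.+1 * L = r.-1 * L); last by case: r r0 => // r _ /=; nia.
by rewrite /Dn !expnMn !expnM.
Qed.

Lemma card_sub_pred n (T : {set 'I_n}) (P : pred 'I_n) :
  #|[set k : {i | i \in T} | P (val k)]| = #|[set i | (i \in T) && P i]|.
Proof.
have -> : [set i | (i \in T) && P i] = val @: [set k : {i | i \in T} | P (val k)].
  apply/setP => i; rewrite inE; apply/idP/imsetP; last first.
  by move=> [k]; rewrite inE => Pk ->; rewrite (valP k).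
move=> /andP[iT Pi]; exists (exist _ i iT) => //; by rewrite inE.
by rewrite card_imset //; exact: val_inj.
Qed.

Lemma sum_eq_ord m k : \sum_(j < m) (k == j :> nat) = (k < m).
Proof.
case: (ltnP k m) => hk.
  rewrite (bigD1 (Ordinal hk)) //= eqxx big1 // => j hj.
  case: eqP => // e; move: hj; rewrite -val_eqE /= e eqxx //.
by rewrite big1 // => j _; case: eqP => // e; have := ltn_ord j; lia.
Qed.

Definition blkc n b (j : nat) (x : cube n) :=
  #|[set i in [set i : 'I_n | i %/ b == j] | ~~ x i]|.
Definition gfun n b th (x : cube n) : bool :=
  [forall j : 'I_(n %/ b), blkc b j x < th].

Lemma Pn_gt0 r : 0 < Pn r.
Proof. by rewrite /Pn expn_gt0. Qed.

Lemma density n r L' : 0 < r -> 0 < L' ->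
  #|[set x : cube n | ~~ gfun (2 * r * (Pn r * L')) (r.+1 * (Pn r * L')) x]| * 2 ^ L'
  <= n %/ (2 * r * (Pn r * L')) * 2 ^ n.
Proof.
move=> r0 L0.
set L := Pn r * L'; set b := 2 * r * L; set th := r.+1 * L; set m := n %/ b.
have b0 : 0 < b by rewrite /b /L; have := Pn_gt0 r; nia.
have hbad : forall j : 'I_m,
    #|[set x : cube n | th <= blkc b j x]| * 2 ^ L' <= 2 ^ n.
  move=> j.
  have cB : #|[set i : 'I_n | i %/ b == j]| = b.
    apply: card_blk => //; have := ltn_ord j; rewrite /m => hj.
    by rewrite -leq_divRL.
  have thB : th <= #|[set i : 'I_n | i %/ b == j]| by rewrite cB /th /b; nia.
  have := bad_bound r0 thB.
  rewrite cB card_ord.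
  have e1 : r.+1 ^ th * r ^ (b - th) * 2 ^ b = Dn r ^ L by rewrite /th /b DL.
  have e2 : (r.+1 + r) ^ b = Pn r ^ L by rewrite /b PL.
  rewrite e2 -mulnA e1.
  have tw := twice (Pn_gt0 r) (PD r0).
  have tw2 : 2 ^ L' * Pn r ^ L <= Dn r ^ L.
    rewrite /L !expnM -expnMn; elim: L' {L0 L b th m b0 cB thB e1 e2 j} => // k IH.
    by rewrite !expnS leq_mul.
  have D0 : 0 < Dn r ^ L by rewrite expn_gt0; have := PD r0; lia.
  have -> : [set x : cube n | th <= #|[set i in [set i0 : 'I_n | i0 %/ b == j] | ~~ x i]|] = [set x : cube n | th <= blkc b j x].
    by apply/setP => x; rewrite !inE.
  move: tw2 D0; generalize #|[set x : cube n | th <= blkc b j x]| (Pn r ^ L) (Dn r ^ L) (2 ^ L') (2 ^ n) => a p d q e.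
  move=> h1 h2 h3.
  have : a * q * d <= e * d by nia.
  by rewrite leq_pmul2r.
apply: (@leq_trans (\sum_(j : 'I_m) #|[set x : cube n | th <= blkc b j x]| * 2 ^ L')).
  rewrite -big_distrl /= leq_mul2r; apply/orP; right.
  rewrite -sum1_card.
  apply: (@leq_trans (\sum_(x in [set x : cube n | ~~ gfun b th x]) \sum_(j : 'I_m) (x \in [set x : cube n | th <= blkc b j x]) : nat)).
    apply: leq_sum => x; rewrite inE => /forallPn [j Hj].
    by rewrite (bigD1 j) //= inE; move: Hj; rewrite -leqNgt => ->.
  apply: (@leq_trans (\sum_(x : cube n) \sum_(j : 'I_m) (x \in [set x : cube n | th <= blkc b j x]) : nat)).
    by rewrite [X in _ <= X](bigID (fun x => x \in [set x : cube n | ~~ gfun b th x])) /= leq_addr.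
  rewrite exchange_big /=; apply: leq_sum => j _.
  by rewrite -sum1_card [X in _ <= X]big_mkcond /=; apply: leq_sum => x _; case: (x \in _).
apply: (@leq_trans (\sum_(j : 'I_m) 2 ^ n)); first by apply: leq_sum => j _; exact: hbad.
by rewrite sum_nat_const card_ord.
Qed.

Lemma averaging n b th r (T : {set 'I_n}) : 0 < r -> 0 < b -> th * (2 * r) = r.+1 * b ->
  r * b <= n -> r.+2 * n <= 2 * r * #|T| ->
  exists j : 'I_(n %/ b), th <= #|[set i | (i \in T) && (i %/ b == j)]|.
Proof.
move=> r0 b0 hth hrb hT.
set m := n %/ b.
case: (boolP [exists j : 'I_m, th <= #|[set i | (i \in T) && (i %/ b == j)]|]) => [/existsP [j hj]|/existsPn H]; first by exists j.
exfalso.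
have H' : forall j : 'I_m, #|[set i | (i \in T) && (i %/ b == j)]| <= th.-1.
  by move=> j; have := H j; rewrite -ltnNge; case: th {H hth} => //.
have hsum : #|T| <= m * th.-1 + (n - m * b).
  rewrite -sum1_card.
  apply: (@leq_trans (\sum_(i in T) ((i %/ b < m) + (m * b <= i)))).
    apply: leq_sum => i _; case: (ltnP (i %/ b) m) => //= h.
    by rewrite -leq_divRL // h.
  rewrite big_split /=; apply: leq_add.
    rewrite (eq_bigr (fun i : 'I_n => \sum_(j < m) (i %/ b == j :> nat))); last by move=> i _; rewrite sum_eq_ord.
    rewrite exchange_big /=.
    apply: (@leq_trans (\sum_(j < m) th.-1)); last by rewrite sum_nat_const card_ord.
    apply: leq_sum => j _; apply: leq_trans (H' j).
    rewrite -sum1_card [X in _ <= X]big_mkcond [X in X <= _]big_mkcond /=; apply: leq_sum => i _.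
    by rewrite inE; case: (i \in T); case: (i %/ b == j).
  rewrite -card_tail -sum1_card [X in _ <= X]big_mkcond [X in X <= _]big_mkcond /=.
  rewrite [X in _ <= X](eq_bigr (fun i : 'I_n => (m * b <= i) : nat)); last by move=> i _; rewrite inE; case: (_ <= _).
  apply: (@leq_trans (\sum_(i : 'I_n) (m * b <= i) : nat)); last by [].
  by apply: leq_sum => i _; case: (i \in T).
have hmb : n < m * b + b by rewrite /m {1}(divn_eq n b) ltn_add2l ltn_pmod.
have hmb2 : m * b <= n by rewrite /m leq_trunc_div.
move: hsum hmb hmb2 hth hrb hT; generalize #|T| m => t m'.
nia.
Qed.

Lemma kill n r L' (S : {set 'I_n}) : 0 < r -> 0 < L' ->
  r * (2 * r * (Pn r * L')) <= n -> r.+2 * n <= 2 * r * #|~: S| ->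
  #|[set u : Omega (~: S) | [exists v : Omega S,
       gfun (2 * r * (Pn r * L')) (r.+1 * (Pn r * L')) (glue u v)]]|
    * 2 ^ (r.+1 * (Pn r * L')) + 2 ^ #|~: S|
  <= 2 ^ #|~: S| * 2 ^ (r.+1 * (Pn r * L')).
Proof.
move=> r0 L0.
set L := Pn r * L'; set b := 2 * r * L; set th := r.+1 * L => hrb hT.
have b0 : 0 < b by rewrite /b /L; have := Pn_gt0 r; nia.
have hth : th * (2 * r) = r.+1 * b by rewrite /th /b; nia.
have [j hj] := averaging r0 b0 hth hrb hT.
move: hj; rewrite -(card_sub_pred (~: S) (fun i => i %/ b == j)) => hj.
have [A' [sA' cA']] := subset_card hj.
have cD : #|{: {i : 'I_n | i \in ~: S}}| = #|~: S| by rewrite card_sig; apply: eq_card => i; rewrite !inE.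
rewrite -cD.
have KB := @kill_bound _ [set u : Omega (~: S) | [exists v : Omega S, gfun b th (glue u v)]] A'.
rewrite cA' in KB; apply: KB => u Hu.
rewrite inE; apply/negP => /existsP [v].
rewrite /gfun => /forallP /(_ j).
rewrite ltnNge => /negP; apply.
rewrite /blkc -cA'.
rewrite -(card_imset _ val_inj).
apply: subset_leq_card; apply/subsetP => i /imsetP [k kA' ->].
have := subsetP sA' k kA'; rewrite inE => hk.
rewrite !inE hk /= glueT Hu //.
Qed.

Lemma base4 a : a * (2 * a).+1 <= 2 ^ (2 * a).
Proof.
elim: a => // a IH.
rewrite (_ : 2 * a.+1 = (2 * a).+2) ?expnS; last by lia.
have : 0 < 2 ^ (2 * a) by rewrite expn_gt0.
move: IH; generalize (2 ^ (2 * a)) => X; nia.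
Qed.

Lemma lin_log a : exists k0, forall k, k0 <= k -> a * k.+1 <= 2 ^ k.
Proof.
exists (2 * a).+1 => k; elim: k => // k IH.
rewrite leq_eqVlt => /orP [/eqP <-|h].
  have := base4 a; rewrite expnS; lia.
have := IH h; rewrite expnS; lia.
Qed.

From Stdlib Require Import Reals Lra Lia ZArith.
Local Open Scope R_scope.


Lemma expn_pow (m k : nat) : (expn m k) = Nat.pow m k.
Proof. elim: k => // k IH; by rewrite expnS IH. Qed.

Lemma INR_expn (m k : nat) : INR (expn m k) = INR m ^ k.
Proof. by rewrite expn_pow pow_INR. Qed.

Lemma INR_muln (m k : nat) : INR (m * k)%nat = INR m * INR k.
Proof. by rewrite mulnE mult_INR. Qed.

Lemma INR_addn (m k : nat) : INR (m + k)%nat = INR m + INR k.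
Proof. by rewrite addnE plus_INR. Qed.

Lemma INR_leq (m k : nat) : (m <= k)%nat -> INR m <= INR k.
Proof. by move/leP; apply: le_INR. Qed.

Lemma INR_ltn (m k : nat) : (m < k)%nat -> INR m < INR k.
Proof. by move/ltP; apply: lt_INR. Qed.

Lemma leq_INR (m k : nat) : INR m <= INR k -> (m <= k)%nat.
Proof. by move/INR_le/leP. Qed.

Lemma ltn_INR (m k : nat) : INR m < INR k -> (m < k)%nat.
Proof. by move/INR_lt/ltP. Qed.

Lemma exists_r d : 0 < d -> exists r : nat, (0 < r)%nat /\ 1 <= INR r * d.
Proof.
move=> d0; have [N [h1 h2]] := archimed_cor1 d d0.
exists N; split; first by apply/ltP.
have hN : 0 < INR N by apply: lt_0_INR.
have := Rmult_lt_compat_l (INR N) _ _ hN h1.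
rewrite Rinv_r; last by lra.
lra.
Qed.

Lemma exists_c0 a : a < 1 -> exists c0 : nat, 2 <= 2 ^ c0 * (1 - a).
Proof.
move=> a1.
have e : 0 < (1 - a) / 2 by lra.
have [N [h1 h2]] := archimed_cor1 _ e.
exists N.
have hN : 0 < INR N by apply: lt_0_INR.
have h3 : 2 < INR N * (1 - a).
  have := Rmult_lt_compat_l (INR N) _ _ hN h1.
  rewrite Rinv_r; last by lra.
  lra.
have h4 : INR N <= 2 ^ N.
  rewrite -(INR_expn 2 N) /=; apply: INR_leq; exact: ltnW (ltn_expl _ _).
have : INR N * (1 - a) <= 2 ^ N * (1 - a) by apply: Rmult_le_compat_r; lra.
lra.
Qed.

Lemma ceil_exists x : 0 < x -> exists k : nat, INR k - 1 < x <= INR k.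
Proof.
move=> x0; have [h1 h2] := archimed x.
have z0 : (0 < up x)%Z by apply: lt_IZR; lra.
case: (Req_EM_T (IZR (up x) - 1) x) => he.
  exists (Z.to_nat (up x - 1)).
  rewrite INR_IZR_INZ Z2Nat.id; last by lia.
  rewrite minus_IZR; lra.
exists (Z.to_nat (up x)).
rewrite INR_IZR_INZ Z2Nat.id; last by lia.
split; last by lra.
have : IZR (up x) - 1 <= x by lra.
lra.
Qed.

Unset Implicit Arguments.

Theorem theorem1p1 (alpha delta : R) (Ha : 0 < alpha < 1) (Hd : 0 < delta < 1) :
  exists C : R, 0 < C /\
  exists N : nat, forall n : nat, (N <= n)%nat ->
  exists f : cube n -> bool,
    (exists k : nat, is_ceil (alpha * 2 ^ n) k /\ mu f = INR k / 2 ^ n) /\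
    forall S : {set 'I_n},
      is_floor ((1/2 - delta) * INR n) #|S| ->
      Jplus S f < 1 - Rpower (INR n) (- C).
Proof.
have [r [r0 hr]] := exists_r (proj1 Hd).
have [c0 hc0] := exists_c0 (proj2 Ha).
pose t := Pn r.
pose E := (r.+1 * t)%nat.
pose A := expn 2 (E * c0.+1).
have [k0 hk0] := lin_log (2 * r * r * t * c0.+1)%nat.
have E0 : (0 < E)%nat by rewrite /E /t muln_gt0 Pn_gt0.
exists (INR E.+1); split; first by apply: lt_0_INR; lia.
exists (expn 2 k0 + A + c0 + 1)%nat => n hn.
pose k := trunc_log 2 n.
pose L' := (c0 + k + 1)%nat.
pose b := (2 * r * (t * L'))%nat.
pose th := (r.+1 * (t * L'))%nat.
have n0 : (0 < n)%nat by lia.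
have hk : (expn 2 k <= n)%nat by apply: trunc_logP.
have hk' : (n < expn 2 k.+1)%nat by have := trunc_log_bounds (p := 2) isT n0; case/andP.
have kk0 : (k0 <= k)%nat by apply: trunc_log_max => //; lia.
have L0 : (0 < L')%nat by rewrite /L'; lia.
have hrb : (r * b <= n)%nat.
  have h1 := hk0 k kk0.
  have h2 : (c0 + k + 1 <= c0.+1 * k.+1)%nat by nia.
  have h3 : (r * b <= 2 * r * r * t * c0.+1 * k.+1)%nat.
    rewrite /b !mulnA (mulnC r 2%nat) -(mulnA _ c0.+1) leq_mul2l h2 orbT //.
  lia.
have hA : (expn 2 th < expn n E.+1)%nat.
  have eth : th = (E * c0.+1 + E * k)%nat by rewrite /th /E /L' !mulnA -mulnDr; congr (_ * _)%nat; lia.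
  rewrite eth expnD (mulnC E k) (expnM 2 k E).
  have h1 : (expn (expn 2 k) E <= expn n E)%nat by rewrite leq_exp2r.
  have h2 : (A < n)%nat by lia.
  rewrite expnS -/A.
  have : (0 < expn (expn 2 k) E)%nat by rewrite !expn_gt0.
  move: h1 h2; generalize (expn (expn 2 k) E) (expn n E) => x y; nia.
pose g := @gfun n b th.
have hdens := density n r0 L0.
have hbad : (#|[set x : cube n | ~~ g x]| * expn 2 c0 < expn 2 n)%nat.
  move: hdens; rewrite -/t -/L' -/b -/th -/g.
  have hm : (n %/ b <= n)%nat by apply: leq_div.
  rewrite (_ : expn 2 L' = expn 2 c0 * expn 2 k.+1)%nat; last by rewrite -expnD /L'; congr expn; lia.
  have : (0 < expn 2 n)%nat by rewrite expn_gt0.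
  move: hm hk'; generalize #|[set x : cube n | ~~ g x]| (n %/ b)%nat (expn 2 c0) (expn 2 k.+1) (expn 2 n) => a m c X Y.
  nia.
have hcard : #|{: cube n}| = expn 2 n by rewrite card_ffun card_bool card_ord.
have hgood : (#|[set x : cube n | g x]| + #|[set x : cube n | ~~ g x]| = expn 2 n)%nat.
  rewrite -hcard -(cardsC [set x : cube n | g x]); congr (_ + _)%nat.
  by apply: eq_card => x; rewrite !inE.
have i2 : INR 2 = 2 by simpl; ring.
have P0 : 0 < 2 ^ n by apply: pow_lt; lra.
have ha2 : 0 < alpha * 2 ^ n by apply: Rmult_lt_0_compat; lra.
have [K [hK1 hK2]] := ceil_exists ha2.
have hKg : (K <= #|[set x : cube n | g x]|)%nat.
  apply: ltnW; apply: ltn_INR.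
  have e2 := f_equal INR hgood; rewrite INR_addn INR_expn i2 in e2.
  have hb := INR_ltn hbad; rewrite INR_muln !INR_expn i2 in hb.
  have hc : 2 ^ c0 <= 2 ^ n by apply: Rle_pow; [lra | apply/leP; lia].
  have C0 : 0 < 2 ^ c0 by apply: pow_lt; lra.
  move: e2 hb hc C0 P0 hc0 hK1; generalize (INR #|[set x : cube n | g x]|) (INR #|[set x : cube n | ~~ g x]|) (2 ^ n) (2 ^ c0) => G x P C.
  move=> e2 hb hc C0 P0 hc0 hK1.
  have h1 : P * 2 <= P * (C * (1 - alpha)) by apply: Rmult_le_compat_l; lra.
  have h2 : 0 < C * (G - alpha * P - 1) by nra.
  have h3 : 0 < G - alpha * P - 1.
    by apply: (Rmult_lt_reg_l C); lra.
  lra.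
have [B [sB cB]] := subset_card hKg.
exists (fun x => x \in B); split.
  exists K; split; first by [].
  rewrite /mu hcard INR_expn i2.
  congr (INR _ / _); rewrite -cB; apply: eq_card => x; rewrite inE.
  done.
move=> S [hS1 hS2].
have hcS : (#|S| + #|~: S| = n)%nat by rewrite cardsC card_ord.
have hT : (r.+2 * n <= 2 * r * #|~: S|)%nat.
  apply: leq_INR; rewrite !INR_muln i2.
  have e := f_equal INR hcS; rewrite INR_addn in e.
  rewrite (_ : INR r.+2 = INR r + 2); last by rewrite !S_INR; ring.
  have n0' : 0 <= INR n by apply: pos_INR.
  have r0' : 0 <= INR r by apply: pos_INR.
  have h1 : INR n <= INR r * delta * INR n by nra.
  nra.
have hK := kill r0 L0 hrb hT.
rewrite -/t -/L' -/b -/th in hK.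
have hsub : (#|[set u : Omega (~: S) | [exists v : Omega S, (fun x => x \in B) (glue u v)]]|
   <= #|[set u : Omega (~: S) | [exists v : Omega S, gfun b th (glue u v)]]|)%nat.
  apply: subset_leq_card; apply/subsetP => u; rewrite !inE => /existsP [v hv].
  apply/existsP; exists v; have := subsetP sB _ hv; by rewrite inE.
have hOm : #|{: Omega (~: S)}| = expn 2 #|~: S|.
  by rewrite card_ffun card_bool card_sig; congr expn; apply: eq_card => i; rewrite !inE.
rewrite /Jplus hOm.
have hK' := INR_leq hK; rewrite INR_addn !INR_muln !INR_expn i2 in hK'.
have hs' := INR_leq hsub.
have hA' := INR_ltn hA; rewrite !INR_expn i2 in hA'.
rewrite Rpower_Ropp Rpower_pow; last by apply: lt_0_INR; apply/ltP.
rewrite INR_expn i2.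
have T0 : 0 < 2 ^ th by apply: pow_lt; lra.
have D0 : 0 < 2 ^ #|~: S| by apply: pow_lt; lra.
move: hK' hs' hA' T0 D0.
generalize (INR #|[set u : Omega (~: S) | [exists v : Omega S, gfun b th (glue u v)]]|)
  (2 ^ th) (2 ^ #|~: S|) (INR n ^ E.+1) => Ug T D Nn.
move=> h1 h2 h3 T0 D0.
set Uf := INR _ in h2 *.
have h4 : Uf / D <= 1 - / T.
  have h7 : Uf * T <= Ug * T by apply: Rmult_le_compat_r; lra.
  have h6 : Uf * T <= D * T - D by lra.
  apply: (Rmult_le_reg_r (D * T)); first by nra.
  replace (Uf / D * (D * T)) with (Uf * T) by (field; lra).
  replace ((1 - / T) * (D * T)) with (D * T - D) by (field; lra).
  lra.
have h5 : / Nn < / T by apply: Rinv_lt_contravar; nra.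
lra.
Qed.
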